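(* Let $2\le n\le N$ and $k\ge0$, and assume that the property $(\mathbf{SS}.N.I.k.\tilde n)$ holds for all $\tilde n\in[1,n-1]$. Then for every partially interactive $n$-particle cube $\Lambda^{(n)}_{L_{k+1}}(\mathbf u)$, $$\mathbb P\Big\{\Lambda^{(n)}_{L_{k+1}}(\mathbf u)\text{ is }(\tfrac12,I)\text{-PT}\Big\}\le 3^{2(n-1)d}L_{k+1}^{-\frac{p^{(n-1)}}2+2(n-1)d}.$$
   Context: Setting. Fix $N\ge2$, $d\ge1$, $r>0$, $g\ne0$. For $1\le m\le N$, points of $\mathbb Z^{md}$ are $\mathbf x=(x_1,\dots,x_m)$, $x_j\in\mathbb Z^d$, with $\|x_j\|=\max_i|x_j^{(i)}|$, $\|\mathbf x\|=\max_j\|x_j\|$, $\langle\mathbf x\rangle=\max\{1,\|\mathbf x\|\}$. The random $m$-particle operator is $\mathbf H^{(m)}_\omega=\frac1g(\mathbf T+\mathbf U)+\mathbf V(\cdot,\omega)$: $\mathbf T(\mathbf x,\mathbf y)=\langle y_j-x_j\rangle^{-r}$ if there is $j$ with $x_i=y_i$ for all $i\ne j$, else $0$; $\mathbf U(\mathbf x)=\sum_{j_1<j_2}U(x_{j_1},x_{j_2})$ with $U$ symmetric, $|U|\le M_1$, $U(x,x')=0$ if $\|x-x'\|\ge\mathrm r_0$ ($\mathrm r_0\ge1$); $\mathbf V(\mathbf x,\omega)=\sum_jV(x_j,\omega)$ with $V(x,\omega)$, $x\in\mathbb Z^d$, i.i.d. with distribution $\mu$ supported in $[-M,M]$ and Hölder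 continuous of order $\rho>0$. Cubes $\Lambda^{(m)}_L(\mathbf u)=\{\mathbf x:\|\mathbf x-\mathbf u\|\le L\}$; $\mathbf H^{(m)}_\Lambda$ is the restriction to $\Lambda$, $\mathbf G^{(m)}_\Lambda(E)=(\mathbf H^{(m)}_\Lambda-E)^{-1}$. Projections $\Pi_j\mathbf x=x_j$, $\Pi_J\Lambda=\bigcup_{j\in J}\Pi_j\Lambda$, $\Pi\Lambda=\Pi_{\{1,\dots,m\}}\Lambda$. Separability: $\Lambda^{(m)}_L(\mathbf u),\Lambda^{(m)}_L(\mathbf v)$ are weakly separable if for some nonempty $J\subseteq\{1,\dots,m\}$ either $\Pi_J\Lambda^{(m)}_{L+\mathrm r_0}(\mathbf u)\cap(\Pi_{J^C}\Lambda^{(m)}_{L+\mathrm r_0}(\mathbf u)\cup\Pi\Lambda^{(m)}_{L+\mathrm r_0}(\mathbf v))=\emptyset$ or the same with $\mathbf u,\mathbf v$ swapped; separable if in addition $\|\mathbf u-\mathbf v\|>11mL$. PI/FI: $\Lambda^{(n)}_L(\mathbf u)$ is fully interactive if $\min_{x\in\mathbb Z^d}\max_j\|u_j-x\|\le2n(L+\mathrm r_0)$ and partially interactive (PI) otherwise. For a PI cube there is a nonempty proper $J$ with $\Pi_J\Lambda^{(n)}_{L+\mathrm r_0}(\mathbf u)\cap\Pi_{J^C}\Lambda^{(n)}_{L+\mathrm r_0}(\mathbf u)=\emptyset$, giving the canonical decomposition $\Lambda^{(n)}_L(\mathbf u)=\Lambda^{(n')}_L(\mathbf u')\times\Lambda^{(n'')}_L(\mathbf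 u'')$, $n'=|J|$, $\mathbf u'=(u_j)_{j\in J}$, $\mathbf u''=(u_j)_{j\in J^C}$. Sobolev norm of a matrix $\mathcal M$ on $X\times Y$: $\|\mathcal M\|_s^2=C_0\sum_{\mathbf v\in X-Y}(\sup_{\mathbf x-\mathbf y=\mathbf v}|\mathcal M(\mathbf x,\mathbf y)|)^2\langle\mathbf v\rangle^{2s}$, $C_0=C_0(s_0^{(m)})>0$ fixed. With parameters $\tau_m\ge0$, $md/2<s_0^{(m)}\le r_m<r-md/2$, an $m$-particle cube $\Lambda^{(m)}_L(\mathbf u)$ is $(E,\tfrac12)$-NS if $\mathbf G^{(m)}_{\Lambda^{(m)}_L(\mathbf u)}(E)$ exists and $\|\mathbf G^{(m)}_{\Lambda^{(m)}_L(\mathbf u)}(E)\|_s\le L^{\tau_m+s/2}$ for all $s\in[s_0^{(m)},r_m]$, and $(E,\tfrac12)$-S otherwise. Parameters: $I=[-MN-1,MN+1]$, $p^{(m)}=18^{N-m}p_0$ with $p_0\ge20Nd$, $L_k=L_0^{4^k}$. Property $(\mathbf{SS}.N.I.k.m)$: for every pair of separable $m$-particle cubes $\Lambda^{(m)}_{L_k}(\mathbf x),\Lambda^{(m)}_{L_k}(\mathbf y)$, $\mathbb P\{\exists E\in I:\text{both }(E,\tfrac12)\text{-S}\}<L_k^{-2p^{(m)}}$. Tunneling: an $m$-particle cube $\Lambda^{(m)}_{L_{k+1}}(\mathbf u)$ is $(\tfrac12,I)$-tunneling if there exist $E\in I$ and two separable $(E,\tfrac12)$-S cubes $\Lambda^{(m)}_{L_k}(\mathbf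 x),\Lambda^{(m)}_{L_k}(\mathbf y)\subset\Lambda^{(m)}_{L_{k+1}}(\mathbf u)$. A PI cube $\Lambda^{(n)}_{L_{k+1}}(\mathbf u)$ with canonical decomposition $\Lambda^{(n')}_{L_{k+1}}(\mathbf u')\times\Lambda^{(n'')}_{L_{k+1}}(\mathbf u'')$ is $(\tfrac12,I)$-partially tunneling ($(\tfrac12,I)$-PT) if at least one of $\Lambda^{(n')}_{L_{k+1}}(\mathbf u')$, $\Lambda^{(n'')}_{L_{k+1}}(\mathbf u'')$ is $(\tfrac12,I)$-tunneling. *)

(* Defs.v *)
From HB Require Import structures.
From mathcomp Require Import all_boot all_order all_algebra.
From mathcomp Require Import all_classical all_reals all_analysis.
Set Implicit Arguments. Unset Strict Implicit. Unset Printing Implicit Defensive.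
Import Order.TTheory GRing.Theory Num.Theory.
Import numFieldNormedType.Exports.
Local Open Scope classical_set_scope.
Local Open Scope ring_scope.

Definition site (d : nat) := {ffun 'I_d -> int}.
Definition cfg (m d : nat) := {ffun 'I_m -> site d}.

Definition nrm_site d (x : site d) : nat := \max_(i < d) `|x i|%N.
Definition nrm_cfg m d (x : cfg m d) : nat := \max_(j < m) nrm_site (x j).
Definition brk_site d (x : site d) : nat := maxn 1 (nrm_site x).
Definition brk_cfg m d (x : cfg m d) : nat := maxn 1 (nrm_cfg x).

Definition sub_site d (x y : site d) : site d := [ffun i => x i - y i].
Definition sub_cfg m d (x y : cfg m d) : cfg m d :=
  [ffun j => sub_site (x j) (y j)].

Definition in_cube (R : realType) m d (L : R) (u x : cfg m d) : Prop :=
  ((nrm_cfg (sub_cfg x u))%:R <= L)%R.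

Definition cube_idx (m d L : nat) := {ffun 'I_m -> {ffun 'I_d -> 'I_(2 * L).+1}}.
Definition cube_pt m d L (u : cfg m d) (k : cube_idx m d L) : cfg m d :=
  [ffun j => [ffun i => u j i + (k j i : nat)%:Z - L%:Z]].
Arguments cube_pt {m d} L u k.

Section Hamiltonian.
Variables (R : realType) (Omega : Type) (d : nat).
Variables (g r : R) (U : site d -> site d -> R) (V : site d -> Omega -> R).

Definition Tkin m (x y : cfg m d) : R :=
  match [pick j : 'I_m | [forall i : 'I_m, (i != j) ==> (x i == y i)]] with
  | Some j => ((brk_site (sub_site (y j) (x j)))%:R `^ (- r))%R
  | None => 0
  end.
Definition Uint m (x : cfg m d) : R :=
  \sum_(j1 < m) \sum_(j2 < m | (j1 < j2)%N) U (x j1) (x j2).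
Definition Vpot m (w : Omega) (x : cfg m d) : R := \sum_(j < m) V (x j) w.
Definition Hm m (w : Omega) (x y : cfg m d) : R :=
  g^-1 * (Tkin x y + (x == y)%:R * Uint x) + (x == y)%:R * Vpot w x.

Definition HLmE m (L : nat) (u : cfg m d) (w : Omega) (E : R)
  (k k' : cube_idx m d L) : R :=
  Hm w (cube_pt L u k) (cube_pt L u k') - (k == k')%:R * E.
Arguments HLmE {m} L u w E k k'.

Definition is_inverse (T : finType) (A G : T -> T -> R) : Prop :=
  (forall x z, \sum_(y : T) A x y * G y z = (x == z)%:R) /\
  (forall x z, \sum_(y : T) G x y * A y z = (x == z)%:R).

Definition sob_norm m (L : nat) (u : cfg m d) (C0 s : R)
  (M : cube_idx m d L -> cube_idx m d L -> R) : R :=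
  Num.sqrt (C0 * \sum_(v <- undup [seq sub_cfg (cube_pt L u p.1) (cube_pt L u p.2)
                                   | p : cube_idx m d L * cube_idx m d L])
     ((\big[Num.max/0]_(p : cube_idx m d L * cube_idx m d L
          | sub_cfg (cube_pt L u p.1) (cube_pt L u p.2) == v) `|M p.1 p.2|) ^+ 2
      * (brk_cfg v)%:R `^ (2 * s))).
Arguments sob_norm {m} L u C0 s M.

(* (E,1/2)-NS and (E,1/2)-S cubes; tau, s0, rr, C0 are the parameters  *)
(* tau_m, s_0^(m), r_m, C_0(s_0^(m)) indexed by the particle number m. *)
Variables (tau s0 rr C0 : nat -> R).
Definition NS m (L : nat) (u : cfg m d) (w : Omega) (E : R) : Prop :=
  exists G, is_inverse (HLmE L u w E) G /\
    forall s, (s0 m <= s <= rr m)%R ->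
      (sob_norm L u (C0 m) s G <= (L%:R : R) `^ (tau m + s / 2))%R.
Definition Sing m (L : nat) (u : cfg m d) (w : Omega) (E : R) : Prop :=
  ~ NS L u w E.
End Hamiltonian.

Definition in_proj (R : realType) m d (J : {set 'I_m}) (L : R) (u : cfg m d)
  (x : site d) : Prop :=
  exists2 j, j \in J & ((nrm_site (sub_site x (u j)))%:R <= L)%R.

Definition wsep_dir (R : realType) m d (r0 L : R) (J : {set 'I_m}) (u v : cfg m d) :=
  forall x : site d, in_proj J (L + r0) u x ->
    ~ (in_proj (~: J)%SET (L + r0) u x \/ in_proj [set: 'I_m]%SET (L + r0) v x).

Definition weakly_separable (R : realType) m d (r0 L : R) (u v : cfg m d) : Prop :=
  exists J : {set 'I_m}, (0 < #|J|)%N /\ (wsep_dir r0 L J u v \/ wsep_dir r0 L J v u).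

Definition separable (R : realType) m d (r0 L : R) (u v : cfg m d) : Prop :=
  weakly_separable r0 L u v /\ ((11 * m)%:R * L < (nrm_cfg (sub_cfg u v))%:R)%R.

Definition PI (R : realType) n d (r0 L : R) (u : cfg n d) : Prop :=
  forall x : site d,
    (2 * n%:R * (L + r0) < (\max_(j < n) nrm_site (sub_site (u j) x))%:R)%R.

Definition subcfg n d (J : {set 'I_n}) (u : cfg n d) : cfg #|J| d :=
  [ffun i => u (enum_val i)].

Definition outerP dO (Omega : measurableType dO) (R : realType)
  (P : probability Omega R) (A : set Omega) : \bar R :=
  ereal_inf [set P B | B in [set B | measurable B /\ A `<=` B]].

Definition Lk (L0 k : nat) : nat := L0 ^ (4 ^ k).

Definition iid_law dO (Omega : measurableType dO) (R : realType) d
  (P : probability Omega R) (V : site d -> Omega -> R) (mu : probability R R) :=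
  (forall x, measurable_fun setT (V x)) /\
  (forall x (B : set R), measurable B -> P [set w | B (V x w)] = mu B) /\
  (forall (s : seq (site d)) (B : site d -> set R), uniq s ->
     (forall x, measurable (B x)) ->
     P [set w | forall x, x \in s -> B x (V x w)] =
     (\prod_(x <- s) P [set w | B x (V x w)])%E).

Definition hoelder_law (R : realType) (mu : probability R R) (rho : R) :=
  exists2 C : R, 0 < C & forall a eps : R, 0 < eps <= 1 ->
    (mu [set` `[a, (a + eps)%R]] <= ((C * eps `^ rho)%R)%:E)%E.

Definition Iint (R : realType) (M : R) (N : nat) : set R :=
  [set E | (- (M * N%:R) - 1 <= E <= M * N%:R + 1)%R].
Definition pexp (R : realType) (N : nat) (p0 : R) (m : nat) : R :=
  ((18 ^ (N - m))%:R * p0)%R.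

Section Events.
Variables (R : realType) (dO : measure_display) (Omega : measurableType dO).
Variables (P : probability Omega R) (d : nat).
Variables (g r : R) (U : site d -> site d -> R) (V : site d -> Omega -> R).
Variables (tau s0 rr C0 : nat -> R) (r0 : R) (I : set R).

Let S m (L : nat) (u : cfg m d) (w : Omega) (E : R) :=
  Sing g r U V tau s0 rr C0 L u w E.

(* Property (SS.N.I.k.m) at scale L = L_k with exponent pm = p^(m) *)
Definition SSprop (m : nat) (L : nat) (pm : R) : Prop :=
  forall x y : cfg m d, separable r0 (L%:R) x y ->
    (outerP P [set w | exists2 E, I E & S L x w E /\ S L y w E]
       < (((L%:R : R) `^ (- (2 * pm)))%R)%:E)%E.

Definition tunneling (m : nat) (Lsmall Lbig : nat) (c : cfg m d) (w : Omega) : Prop :=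
  exists2 E, I E & exists x y : cfg m d,
    [/\ separable r0 (Lsmall%:R) x y,
        (forall z, in_cube (Lsmall%:R : R) x z -> in_cube (Lbig%:R : R) c z),
        (forall z, in_cube (Lsmall%:R : R) y z -> in_cube (Lbig%:R : R) c z),
        S Lsmall x w E & S Lsmall y w E].

Definition part_tunneling n (J : {set 'I_n}) (Lsmall Lbig : nat) (u : cfg n d)
  (w : Omega) : Prop :=
  tunneling Lsmall Lbig (subcfg J u) w \/ tunneling Lsmall Lbig (subcfg (~: J) u) w.
End Events.

Definition decomp (R : realType) n d (r0 L : R) (J : {set 'I_n}) (u : cfg n d) : Prop :=
  [/\ (0 < #|J|)%N, (#|J| < n)%N &
      forall x : site d, in_proj J (L + r0) u x -> ~ in_proj (~: J) (L + r0) u x].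

(* Main.v *)
Require Import Defs.
From HB Require Import structures.
From mathcomp Require Import all_boot all_order all_algebra.
From mathcomp Require Import all_classical all_reals all_analysis.
From mathcomp Require Import zify ring lra.
Import Order.TTheory GRing.Theory Num.Theory.
Import numFieldNormedType.Exports.
Local Open Scope classical_set_scope.
Local Open Scope ring_scope.

Lemma outer_le dO (Omega : measurableType dO) (R : realType) (P : probability Omega R)
  (A B : set Omega) : measurable B -> A `<=` B -> (outerP P A <= P B)%E.
Proof. move=> mB AB; apply: ge_ereal_inf; exists (P B) => //; by exists B. Qed.

Lemma outer_lt dO (Omega : measurableType dO) (R : realType) (P : probability Omega R)
  (A : set Omega) t : (outerP P A < t)%E ->
  exists B, [/\ measurable B, A `<=` B & (P B < t)%E].
Proof. by move=> /ereal_inf_lt [y [B [mB AB] <-] lt]; exists B. Qed.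

Arguments outer_lt {dO Omega R P A t}.
Arguments outer_le {dO Omega R P A B}.

Lemma meas_bigU dO (Omega : measurableType dO) (R : realType) (P : probability Omega R)
  (I : Type) (s : seq I) (f : I -> set Omega) : (forall i, measurable (f i)) ->
  (P (\big[setU/set0]_(i <- s) f i) <= \sum_(i <- s) P (f i))%E.
Proof.
move=> mf; elim: s => [|a s IH]; first by rewrite !big_nil measure0.
rewrite !big_cons; apply: le_trans (measureU2 _ _ _) _ => //.
  exact: bigsetU_measurable.
by rewrite leeD2l.
Qed.

Arguments meas_bigU {dO Omega R} P {I s f}.

Lemma in_bigU (T : Type) (I : eqType) (s : seq I) (f : I -> set T) (q : I) :
  q \in s -> f q `<=` \big[setU/set0]_(i <- s) f i.
Proof.
elim: s => [|a s IH] //; rewrite in_cons big_cons => /orP [/eqP ->|h].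
  by move=> w fw; left.
by move=> w fw; right; apply: IH.
Qed.

Lemma cube_idx_of m d (L : nat) (c x : cfg m d) :
  (nrm_cfg (sub_cfg x c) <= L)%N -> exists k : cube_idx m d L, cube_pt L c k = x.
Proof.
move=> HL.
have H j i : (`|x j i - c j i| <= L)%N.
  apply: leq_trans HL.
  apply: leq_trans (leq_bigmax (F := fun j => nrm_site (sub_cfg x c j)) j).
  rewrite /nrm_site ffunE.
  apply: leq_trans (leq_bigmax (F := fun i => `|sub_site (x j) (c j) i|%N) i).
  by rewrite ffunE.
exists [ffun j => [ffun i => inord `|(x j i - c j i + L%:Z)%R|%N]].
apply/ffunP => j; apply/ffunP => i; rewrite !ffunE inordK.
  have := H j i; move: (x j i) (c j i) => a b; lia.
have := H j i; move: (x j i) (c j i) => a b; lia.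
Qed.

Lemma nrm_cfg_self m d (x : cfg m d) : nrm_cfg (sub_cfg x x) = 0%N.
Proof.
rewrite /nrm_cfg big1 // => j _; rewrite /nrm_site big1 // => i _.
by rewrite !ffunE subrr.
Qed.

Section Cover.
Variables (R : realType) (dO : measure_display) (Omega : measurableType dO).
Variables (P : probability Omega R) (d : nat).
Variables (g r : R) (U : site d -> site d -> R) (V : site d -> Omega -> R).
Variables (tau s0 rr C0 : nat -> R) (r0 : R) (I : set R).

Lemma tunnel_cover m (Ls Lb : nat) (pm : R) (c : cfg m d) :
  SSprop P g r U V tau s0 rr C0 r0 I m Ls pm ->
  exists B, [/\ measurable B,
    [set w | tunneling g r U V tau s0 rr C0 r0 I Ls Lb c w] `<=` B &
    (P B <= (((#|cube_idx m d Lb| ^ 2)%N)%:R * ((Ls%:R : R) `^ (- (2 * pm))))%:E)%E].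
Proof.
move=> SS.
set t := ((Ls%:R : R) `^ _).
pose T := (cube_idx m d Lb * cube_idx m d Lb)%type.
pose A (q : T) := [set w | separable r0 (Ls%:R : R) (cube_pt Lb c q.1) (cube_pt Lb c q.2)
   /\ exists2 E, I E & Sing g r U V tau s0 rr C0 Ls (cube_pt Lb c q.1) w E
                  /\ Sing g r U V tau s0 rr C0 Ls (cube_pt Lb c q.2) w E].
have : forall q, exists B, measurable B /\ A q `<=` B /\ (P B <= t%:E)%E.
  move=> q; case: (pselect (separable r0 (Ls%:R : R) (cube_pt Lb c q.1) (cube_pt Lb c q.2))) => hs.
    have [B [mB sub lt]] := outer_lt (SS _ _ hs).
    exists B; split => //; split; last exact: ltW.
    by move=> w [_ h]; apply: sub.
  exists set0; split => //; split; first by move=> w [].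
  by rewrite measure0 lee_fin powR_ge0.
case/choice => f hf.
exists (\big[setU/set0]_(q <- index_enum T) f q); split.
- by apply: bigsetU_measurable => q _; case: (hf q).
- move=> w [E IE [x [y [hs hx hy Sx Sy]]]].
  have ix z : in_cube (Ls%:R : R) z z by rewrite /in_cube nrm_cfg_self ler0n.
  have := hx x (ix _ _ x); rewrite /in_cube ler_nat => /cube_idx_of [kx ekx].
  have := hy y (ix _ _ y); rewrite /in_cube ler_nat => /cube_idx_of [ky eky].
  apply: (@in_bigU _ _ _ _ (kx, ky)); first exact: mem_index_enum.
  case: (hf (kx, ky)) => _ [sub _]; apply: sub; rewrite /A /= ekx eky.
  by split => //; exists E.
- apply: le_trans (meas_bigU P _) _; first by move=> q; case: (hf q).
  apply: le_trans (lee_sum (g := fun=> t%:E) _ _) _.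
    by move=> q _; case: (hf q) => _ [].
  rewrite sumEFin lee_fin sumr_const.
  by rewrite mulr_natl card_prod expnS expn1.
Qed.
End Cover.

Lemma pow_helper (A C e : nat) : (2 * A <= C)%N -> (1 <= e)%N -> (2 * A ^ e <= C ^ e)%N.
Proof.
move=> hAC; elim: e => // e IH _.
case: e IH => [|e] IH; first by rewrite !expn1.
rewrite (expnS A) (expnS C) mulnCA; apply: leq_mul; first lia.
exact: IH.
Qed.

Lemma numeric (R : realType) (N d n n1 n2 L0 k : nat) (p0 : R) :
  (2 <= L0)%N -> (1 <= d)%N -> (2 <= n)%N -> (1 <= n1 <= n - 1)%N ->
  (1 <= n2 <= n - 1)%N -> 0 <= p0 ->
  ((#|cube_idx n1 d (Lk L0 k.+1)| ^ 2)%N%:R * ((Lk L0 k)%:R `^ (- (2 * pexp N p0 n1)))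
   + (#|cube_idx n2 d (Lk L0 k.+1)| ^ 2)%N%:R * ((Lk L0 k)%:R `^ (- (2 * pexp N p0 n2))) : R)
  <= (3 ^ (2 * (n - 1) * d))%:R
     * (Lk L0 k.+1)%:R `^ (- (pexp N p0 (n - 1) / 2) + (2 * (n - 1) * d)%:R).
Proof.
move=> L02 d1 n2' hn1 hn2 p00.
set Lb := Lk L0 k.+1; set Ls := Lk L0 k; set p := pexp N p0 (n - 1).
set X := (Lb%:R : R) `^ (- (p / 2)).
have eLb : Lb = (Ls ^ 4)%N by rewrite /Lb /Ls /Lk expnS mulnC expnM.
have Ls1 : (1 <= Ls)%N by rewrite /Ls /Lk expn_gt0; apply/orP; left; lia.
have Lb16 : (16 <= Lb)%N.
  have h4 : (4 <= 4 ^ k.+1)%N by rewrite expnS; have := expn_gt0 4 k; lia.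
  rewrite /Lb /Lk; apply: leq_trans (leq_pexp2l _ h4); last lia.
  have : (2 ^ 4 <= L0 ^ 4)%N by rewrite leq_exp2r.
  done.
have X0 : 0 <= X by exact: powR_ge0.
have hp q : (1 <= q <= n - 1)%N -> (Ls%:R : R) `^ (- (2 * pexp N p0 q)) <= X.
  move=> hq.
  rewrite /X eLb natrX -powR_mulrn ?ler0n // -powRrM.
  apply: ler_powR; first by rewrite ler1n.
  have : p <= pexp N p0 q.
    rewrite /p /pexp ler_wpM2r // ler_nat leq_pexp2l //; lia.
  move=> h; lra.
set e := ((n - 1) * d)%N.
have e1 : (1 <= e)%N by rewrite /e; nia.
have hK q : (1 <= q <= n - 1)%N -> (#|cube_idx q d Lb| ^ 2 <= (2 * Lb).+1 ^ (2 * e))%N.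
  move=> hq; rewrite /cube_idx !card_ffun !card_ord -!expnM.
  apply: leq_pexp2l => //; rewrite /e; nia.
have hnat : (2 * (2 * Lb).+1 ^ (2 * e) <= (3 * Lb) ^ (2 * e))%N.
  rewrite (expnM _ 2 e) (expnM _ 2 e); apply: pow_helper => //.
  rewrite !expnS !expn0; move: Lb16; move: (Lb) => x hx; nia.
apply: le_trans (_ : ((2 * (2 * Lb).+1 ^ (2 * e))%N%:R * X) <= _).
  apply: le_trans (_ : (((2 * Lb).+1 ^ (2 * e))%N%:R * X
                        + ((2 * Lb).+1 ^ (2 * e))%N%:R * X) <= _).
    apply: lerD; apply: ler_pM; rewrite ?ler0n ?powR_ge0 ?ler_nat ?hK ?hp //.
  by rewrite -mulrDl -natrD addnn -mul2n.
rewrite powRD; last by apply/implyP => _; rewrite pnatr_eq0; move: Lb16; move: (Lb) => x hx; lia.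
rewrite powR_mulrn ?ler0n // -/X -mulnA -/e (mulrC X) mulrA ler_wpM2r //.
apply: le_trans (_ : ((3 * Lb) ^ (2 * e))%N%:R <= _).
  by rewrite ler_nat.
by rewrite expnMn natrM natrX (natrX _ Lb).
Qed.
Theorem lemma3p3
  (R : realType) (dO : measure_display) (Omega : measurableType dO)
  (P : probability Omega R)
  (N d : nat) (r g r0 M1 M rho p0 : R) (L0 n k : nat)
  (U : site d -> site d -> R) (V : site d -> Omega -> R)
  (mu : probability R R) (tau s0 rr C0 : nat -> R) :
  (2 <= N)%N -> (1 <= d)%N -> 0 < r -> g != 0 ->
  (* two-body interaction *)
  1 <= r0 ->
  (forall x y, U x y = U y x) ->
  (forall x y, `|U x y| <= M1) ->
  (forall x y, r0 <= (nrm_site (sub_site x y))%:R -> U x y = 0) ->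
  (* i.i.d. random potential with law mu supported in [-M,M], Hoelder of order rho *)
  iid_law P V mu ->
  mu [set` `[- M, M]] = 1%E ->
  0 < rho -> hoelder_law mu rho ->
  (* parameters of the Sobolev norms *)
  (forall m, (1 <= m <= N)%N ->
     [/\ 0 <= tau m, 0 < C0 m, (m * d)%:R / 2 < s0 m, s0 m <= rr m
       & rr m < r - (m * d)%:R / 2]) ->
  20 * N%:R * d%:R <= p0 ->
  (1 <= L0)%N ->
  (2 <= n <= N)%N ->
  (forall nt, (1 <= nt <= n - 1)%N ->
     SSprop P g r U V tau s0 rr C0 r0 (Iint M N) nt (Lk L0 k) (pexp N p0 nt)) ->
  forall u : cfg n d, PI r0 (Lk L0 k.+1)%:R u ->
  forall J : {set 'I_n}, decomp r0 (Lk L0 k.+1)%:R J u ->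
  (outerP P [set w | part_tunneling g r U V tau s0 rr C0 r0 (Iint M N) J
                        (Lk L0 k) (Lk L0 k.+1) u w]
   <= ((3 ^ (2 * (n - 1) * d))%:R
        * (Lk L0 k.+1)%:R `^ (- (pexp N p0 (n - 1) / 2) + (2 * (n - 1) * d)%:R))%:E)%E.
Proof.
move=> N2 d1 r0' gn0 r01 Usym Ubd Ur iid muM rho0 hol par p0b L01 nN SS u PIu J [J0 Jn dis].
have p00 : 0 <= p0.
  by apply: le_trans p0b; rewrite !mulr_ge0 ?ler0n.
case: (eqVneq L0 1%N) => [L0e|L0ne].
  apply: le_trans (outer_le measurableT (@subsetT _ _)) _.
  rewrite probability_setT lee_fin /Lk L0e exp1n powR1 mulr1 ler1n expn_gt0.
  done.
have L02 : (2 <= L0)%N by lia.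
have hJc : #|~: J| = (n - #|J|)%N by have := cardsC J; rewrite card_ord; lia.
have h1 : (1 <= #|J| <= n - 1)%N by lia.
have h2 : (1 <= #|~: J| <= n - 1)%N by rewrite hJc; lia.
have [B1 [mB1 sB1 PB1]] := @tunnel_cover _ _ _ P _ g r U V tau s0 rr C0 r0 (Iint M N)
   _ _ (Lk L0 k.+1) _ (subcfg J u) (SS _ h1).
have [B2 [mB2 sB2 PB2]] := @tunnel_cover _ _ _ P _ g r U V tau s0 rr C0 r0 (Iint M N)
   _ _ (Lk L0 k.+1) _ (subcfg (~: J) u) (SS _ h2).
apply: le_trans (outer_le (measurableU _ _ mB1 mB2) _) _.
  by move=> w [h|h]; [left; exact: sB1 | right; exact: sB2].
apply: le_trans (measureU2 _ mB1 mB2) _.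
apply: le_trans (leeD PB1 PB2) _.
rewrite -EFinD lee_fin.
apply: numeric => //; lia.
Qed.
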